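(* Let $M$ be a countable LA-structure which is a model of $\forall_1$-$Th(\mathbb{N})$ (the set of all universal LA-sentences true in $\mathbb{N}$). Then $M$ can be embedded (as an LA-structure) into the reduced power $\mathbb{N}^{\omega}/\mathcal{F}$, where $\mathcal{F}$ is the cofinite filter on $\omega$.
   Context: LA is the first-order language with non-logical symbols $+,\cdot,0,1,\leq$; $\mathbb{N}$ is the standard LA-structure. The reduced power $\mathbb{N}^\omega/\mathcal{F}$ has as elements the classes of functions $f:\omega\to\mathbb{N}$ modulo agreement on a cofinite set, with $+,\cdot$ defined pointwise, $0,1$ the classes of constant functions, and $[f]\le[g]$ iff $f(n)\le g(n)$ for all but finitely many $n$. An embedding is an injective map preserving $0,1,+,\cdot$ and $\leq$. *)

(* Defs.v *)
From Stdlib Require Import Arith PeanoNat.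

(** * LA-structures (equality is interpreted as Leibniz equality) *)
Record LAStructure := {
  carrier :> Type;
  s_add : carrier -> carrier -> carrier;
  s_mul : carrier -> carrier -> carrier;
  s_zero : carrier;
  s_one : carrier;
  s_le : carrier -> carrier -> Prop
}.

Definition NatStr : LAStructure :=
  {| carrier := nat; s_add := Nat.add; s_mul := Nat.mul;
     s_zero := 0; s_one := 1; s_le := le |}.

Inductive term : Type :=
  | tvar : nat -> term
  | tzero : term
  | tone : term
  | tadd : term -> term -> term
  | tmul : term -> term -> term.

Inductive formula : Type :=
  | fEq : term -> term -> formula
  | fLe : term -> term -> formula
  | fFalse : formula
  | fNot : formula -> formula
  | fAnd : formula -> formula -> formula
  | fOr : formula -> formula -> formula
  | fImp : formula -> formula -> formula
  | fAll : nat -> formula -> formula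
  | fEx : nat -> formula -> formula.

Fixpoint occurs (x : nat) (t : term) : Prop :=
  match t with
  | tvar y => x = y
  | tzero | tone => False
  | tadd a b | tmul a b => occurs x a \/ occurs x b
  end.

Fixpoint free_in (x : nat) (f : formula) : Prop :=
  match f with
  | fEq a b | fLe a b => occurs x a \/ occurs x b
  | fFalse => False
  | fNot g => free_in x g
  | fAnd g h | fOr g h | fImp g h => free_in x g \/ free_in x h
  | fAll y g | fEx y g => x <> y /\ free_in x g
  end.

Definition sentence (f : formula) : Prop := forall x, ~ free_in x f.

Fixpoint qfree (f : formula) : Prop :=
  match f with
  | fEq _ _ | fLe _ _ | fFalse => True
  | fNot g => qfree g
  | fAnd g h | fOr g h | fImp g h => qfree g /\ qfree h
  | fAll _ _ | fEx _ _ => False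
  end.

Inductive universal : formula -> Prop :=
  | univ_qf : forall f, qfree f -> universal f
  | univ_all : forall x f, universal f -> universal (fAll x f).

Definition upd {M : Type} (v : nat -> M) (x : nat) (a : M) : nat -> M :=
  fun y => if Nat.eqb y x then a else v y.

Fixpoint teval (M : LAStructure) (v : nat -> M) (t : term) : M :=
  match t with
  | tvar x => v x
  | tzero => s_zero M
  | tone => s_one M
  | tadd a b => s_add M (teval M v a) (teval M v b)
  | tmul a b => s_mul M (teval M v a) (teval M v b)
  end.

Fixpoint sat (M : LAStructure) (v : nat -> M) (f : formula) : Prop :=
  match f with
  | fEq a b => teval M v a = teval M v b
  | fLe a b => s_le M (teval M v a) (teval M v b)
  | fFalse => False
  | fNot g => ~ sat M v g
  | fAnd g h => sat M v g /\ sat M v h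
  | fOr g h => sat M v g \/ sat M v h
  | fImp g h => sat M v g -> sat M v h
  | fAll x g => forall a : M, sat M (upd v x a) g
  | fEx x g => exists a : M, sat M (upd v x a) g
  end.

(** Truth of a sentence (valuation-independent for sentences). *)
Definition models (M : LAStructure) (f : formula) : Prop :=
  forall v : nat -> M, sat M v f.

Definition models_univ_th_N (M : LAStructure) : Prop :=
  forall f, universal f -> sentence f -> models NatStr f -> models M f.

Definition countable (M : LAStructure) : Prop :=
  exists enc : M -> nat, forall a b, enc a = enc b -> a = b.

(** * The reduced power N^omega / F, F the cofinite filter on omega.
    Elements are represented by functions nat -> nat; two represent the same
    class iff they agree on a cofinite set (i.e. eventually). *)
Definition cofinitely (P : nat -> Prop) : Prop :=
  exists N, forall n, N <= n -> P n.

Definition rp_eq (f g : nat -> nat) : Prop := cofinitely (fun n => f n = g n).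
Definition rp_le (f g : nat -> nat) : Prop := cofinitely (fun n => f n <= g n).
Definition rp_add (f g : nat -> nat) : nat -> nat := fun n => f n + g n.
Definition rp_mul (f g : nat -> nat) : nat -> nat := fun n => f n * g n.
Definition rp_zero : nat -> nat := fun _ => 0.
Definition rp_one : nat -> nat := fun _ => 1.

(** An LA-embedding of M into N^omega/F, given by choosing a representative
    h a of the class assigned to each a : M. *)
Definition embeds_into_reduced_power (M : LAStructure) : Prop :=
  exists h : M -> (nat -> nat),
    (forall a b, rp_eq (h a) (h b) -> a = b) /\
    rp_eq (h (s_zero M)) rp_zero /\
    rp_eq (h (s_one M)) rp_one /\
    (forall a b, rp_eq (h (s_add M a b)) (rp_add (h a) (h b))) /\
    (forall a b, rp_eq (h (s_mul M a b)) (rp_mul (h a) (h b))) /\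
    (forall a b, s_le M a b <-> rp_le (h a) (h b)).

(* Main.v *)
Require Import Defs.
From Stdlib Require Import Arith PeanoNat List Lia Classical ClassicalEpsilon.
Import ListNotations.

Lemma teval_agree (K : LAStructure) (v w : nat -> K) (t : term) :
  (forall x, occurs x t -> v x = w x) -> teval K v t = teval K w t.
Proof.
  induction t; simpl; intros H; auto.
  - rewrite IHt1, IHt2; auto.
  - rewrite IHt1, IHt2; auto.
Qed.

Lemma sat_agree (K : LAStructure) (f : formula) : forall (v w : nat -> K),
  (forall x, free_in x f -> v x = w x) -> (sat K v f <-> sat K w f).
Proof.
  induction f; simpl; intros v w H.
  - rewrite (teval_agree K v w t), (teval_agree K v w t0); [tauto| |]; auto.
  - rewrite (teval_agree K v w t), (teval_agree K v w t0); [tauto| |]; auto.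
  - tauto.
  - rewrite (IHf v w); auto; tauto.
  - rewrite (IHf1 v w), (IHf2 v w); auto; tauto.
  - rewrite (IHf1 v w), (IHf2 v w); auto; tauto.
  - rewrite (IHf1 v w), (IHf2 v w); auto; tauto.
  - split; intros Hs a; [rewrite <- (IHf (upd v n a)) | rewrite (IHf (upd v n a) (upd w n a))]; auto;
    intros x Hx; unfold upd; destruct (Nat.eqb_spec x n); auto.
  - split; intros [a Hs]; exists a; [rewrite <- (IHf (upd v n a)) | rewrite (IHf (upd v n a) (upd w n a))]; auto;
    intros x Hx; unfold upd; destruct (Nat.eqb_spec x n); auto.
Qed.

Fixpoint alls (xs : list nat) (f : formula) : formula :=
  match xs with
  | [] => f
  | x :: r => fAll x (alls r f)
  end.

Lemma alls_universal xs f : qfree f -> universal (alls xs f).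
Proof. induction xs; simpl; intros; [apply univ_qf | apply univ_all]; auto. Qed.

Lemma alls_free x xs f : free_in x (alls xs f) -> ~ In x xs /\ free_in x f.
Proof.
  induction xs; simpl; auto.
  intros [H1 H2]. destruct (IHxs H2). split; auto. intros [E|E]; auto.
Qed.

Fixpoint updl {K : Type} (v : nat -> K) (xs : list nat) (w : nat -> K) : nat -> K :=
  match xs with
  | [] => v
  | x :: r => updl (upd v x (w x)) r w
  end.

Lemma alls_inst (K : LAStructure) xs f : forall (v w : nat -> K),
  sat K v (alls xs f) -> sat K (updl v xs w) f.
Proof.
  induction xs; simpl; auto.
Qed.

Lemma updl_notin {K : Type} xs : forall (v w : nat -> K) y, ~ In y xs -> updl v xs w y = v y.
Proof.
  induction xs; simpl; auto.
  intros v w y Hy. rewrite IHxs by tauto. unfold upd.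
  destruct (Nat.eqb_spec y a); subst; auto. exfalso; tauto.
Qed.

Lemma updl_in {K : Type} xs : forall (v w : nat -> K) y, In y xs -> updl v xs w y = w y.
Proof.
  induction xs; simpl; [tauto|].
  intros v w y Hy.
  destruct (in_dec Nat.eq_dec y xs) as [I|I]; auto.
  destruct Hy as [E|E]; [|contradiction]. subst.
  rewrite updl_notin by auto. unfold upd. rewrite Nat.eqb_refl. auto.
Qed.

Lemma alls_not (K : LAStructure) xs f : forall (v : nat -> K),
  ~ sat K v (alls xs f) -> exists w, ~ sat K w f.
Proof.
  induction xs; simpl; eauto.
  intros v H. apply not_all_ex_not in H. destruct H as [b Hb]. eauto.
Qed.

Definition atoms_ij (n i j : nat) : list formula :=
  [fEq (tvar i) (tvar j); fLe (tvar i) (tvar j); fEq (tvar i) tzero; fEq (tvar i) tone]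
  ++ map (fun k => fEq (tadd (tvar i) (tvar j)) (tvar k)) (seq 0 n)
  ++ map (fun k => fEq (tmul (tvar i) (tvar j)) (tvar k)) (seq 0 n).

Definition atoms (n : nat) : list formula :=
  flat_map (fun i => flat_map (fun j => atoms_ij n i j) (seq 0 n)) (seq 0 n).

Lemma atoms_free n : forall f, In f (atoms n) -> forall x, free_in x f -> x < n.
Proof.
  intros f Hf x Hx. unfold atoms in Hf.
  apply in_flat_map in Hf as [i [Hi Hf]]. apply in_flat_map in Hf as [j [Hj Hf]].
  apply in_seq in Hi. apply in_seq in Hj.
  unfold atoms_ij in Hf. simpl in Hf.
  destruct Hf as [E|[E|[E|[E|Hf]]]]; try (subst; simpl in Hx; lia).
  apply in_app_iff in Hf as [Hf|Hf]; apply in_map_iff in Hf as [k [E Hk]]; apply in_seq in Hk;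
    subst; simpl in Hx; lia.
Qed.

Lemma atoms_qfree n : forall f, In f (atoms n) -> qfree f.
Proof.
  intros f Hf. unfold atoms in Hf.
  apply in_flat_map in Hf as [i [Hi Hf]]. apply in_flat_map in Hf as [j [Hj Hf]].
  unfold atoms_ij in Hf. simpl in Hf.
  destruct Hf as [E|[E|[E|[E|Hf]]]]; try (subst; simpl; auto).
  apply in_app_iff in Hf as [Hf|Hf]; apply in_map_iff in Hf as [k [E Hk]]; subst; simpl; auto.
Qed.

Lemma atoms_in n i j : i < n -> j < n -> forall f, In f (atoms_ij n i j) -> In f (atoms n).
Proof.
  intros Hi Hj f Hf. unfold atoms. apply in_flat_map. exists i. split; [apply in_seq; lia|].
  apply in_flat_map. exists j. split; [apply in_seq; lia|]. auto.
Qed.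

Definition lit (K : LAStructure) (e : nat -> K) (f : formula) : formula :=
  if excluded_middle_informative (sat K e f) then f else fNot f.

Definition conj (fs : list formula) : formula :=
  fold_right fAnd (fNot fFalse) fs.

Lemma conj_sat (K : LAStructure) v fs : sat K v (conj fs) <-> (forall f, In f fs -> sat K v f).
Proof.
  induction fs; simpl; split; intros H.
  - tauto.
  - tauto.
  - intros f [E|E]; subst; [tauto|]. apply IHfs; tauto.
  - split; auto. apply IHfs; auto.
Qed.

Lemma conj_free x fs : free_in x (conj fs) -> exists f, In f fs /\ free_in x f.
Proof.
  induction fs; simpl; [tauto|]. intros [H|H]; eauto.
  destruct (IHfs H) as [f [? ?]]; eauto.
Qed.

Lemma conj_qfree fs : (forall f, In f fs -> qfree f) -> qfree (conj fs).
Proof. induction fs; simpl; auto. Qed.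

Definition diag (K : LAStructure) (e : nat -> K) n := conj (map (lit K e) (atoms n)).

Lemma lit_free K e f x : free_in x (lit K e f) -> free_in x f.
Proof. unfold lit; destruct excluded_middle_informative; simpl; auto. Qed.

Lemma transfer (K : LAStructure) (e : nat -> K) (HK : models_univ_th_N K) n :
  exists w : nat -> nat, forall f, In f (atoms n) -> (sat K e f <-> sat NatStr w f).
Proof.
  set (S := alls (seq 0 n) (fNot (diag K e n))).
  assert (Hdiag : sat K e (diag K e n)).
  { apply conj_sat. intros f Hf. apply in_map_iff in Hf as [g [<- Hg]].
    unfold lit. destruct excluded_middle_informative; simpl; auto. }
  assert (HnotN : ~ models NatStr S).
  { intros HN. assert (HM : models K S).
    { apply HK.
      - apply alls_universal. simpl. apply conj_qfree. intros f Hf.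
        apply in_map_iff in Hf as [g [<- Hg]]. unfold lit.
        destruct excluded_middle_informative; simpl; eapply atoms_qfree; eauto.
      - intros x Hx. apply alls_free in Hx as [H1 H2]. simpl in H2.
        apply conj_free in H2 as [f [Hf Hx]]. apply in_map_iff in Hf as [g [<- Hg]].
        apply lit_free in Hx. apply (atoms_free n g Hg) in Hx. apply H1. apply in_seq. lia.
      - exact HN. }
    specialize (HM e). apply (alls_inst K _ _ _ e) in HM. simpl in HM. apply HM.
    rewrite (sat_agree K _ (updl e (seq 0 n) e) e); auto.
    intros x Hx. apply updl_in. apply in_seq.
    apply conj_free in Hx as [f [Hf Hx]]. apply in_map_iff in Hf as [g [<- Hg]].
    apply lit_free in Hx. apply (atoms_free n g Hg) in Hx. lia. }
  unfold models in HnotN. apply not_all_ex_not in HnotN as [v Hv].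
  apply alls_not in Hv as [w Hw]. simpl in Hw. apply NNPP in Hw.
  exists w. intros f Hf.
  unfold diag in Hw. rewrite conj_sat in Hw. assert (Hl := Hw (lit K e f) (in_map _ _ _ Hf)).
  unfold lit in Hl. destruct excluded_middle_informative; simpl in *; tauto.
Qed.

Theorem mainTheorem3 (M : LAStructure) :
  countable M -> models_univ_th_N M -> embeds_into_reduced_power M.
Proof.
  intros [enc Henc] HM.
  set (e := fun k : nat => match excluded_middle_informative (exists a, enc a = k) with
                | left H => proj1_sig (constructive_indefinite_description _ H)
                | right _ => s_zero M end).
  assert (He : forall a, e (enc a) = a).
  { intros a. unfold e. destruct excluded_middle_informative as [H|H].
    - destruct constructive_indefinite_description as [b Hb]; simpl. auto.
    - exfalso; eauto. }
  set (W := fun n => proj1_sig (constructive_indefinite_description _ (transfer M e HM n))).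
  assert (HW : forall n f, In f (atoms n) -> (sat M e f <-> sat NatStr (W n) f)).
  { intros n. unfold W. destruct constructive_indefinite_description; simpl; auto. }
  assert (Hat : forall n i j f, i < n -> j < n -> In f (atoms_ij n i j) ->
            (sat M e f <-> sat NatStr (W n) f)).
  { intros n i j f Hi Hj Hf. exact (HW n f (atoms_in n i j Hi Hj f Hf)). }
  exists (fun a n => W n (enc a)).
  split; [|split; [|split; [|split; [|split]]]].
  - intros a b [N HN]. apply NNPP. intros Hab.
    set (n := S (N + enc a + enc b)).
    assert (H := Hat n (enc a) (enc b) (fEq (tvar (enc a)) (tvar (enc b)))).
    simpl in H. rewrite !He in H. apply Hab. apply H; try (unfold n; lia); [simpl; auto|].
    apply HN. unfold n; lia.
  - exists (S (enc (s_zero M))). intros n Hn.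
    assert (H := Hat n (enc (s_zero M)) (enc (s_zero M)) (fEq (tvar (enc (s_zero M))) tzero)).
    simpl in H. rewrite !He in H. apply H; try lia; simpl; auto.
  - exists (S (enc (s_one M))). intros n Hn.
    assert (H := Hat n (enc (s_one M)) (enc (s_one M)) (fEq (tvar (enc (s_one M))) tone)).
    simpl in H. rewrite !He in H. apply H; try lia; simpl; auto.
  - intros a b. exists (S (enc a + enc b + enc (s_add M a b))). intros n Hn.
    set (f := fEq (tadd (tvar (enc a)) (tvar (enc b))) (tvar (enc (s_add M a b)))).
    assert (Hin : In f (atoms_ij n (enc a) (enc b))).
    { unfold atoms_ij. apply in_app_iff. right. apply in_app_iff. left.
      apply in_map_iff. eexists; split; [reflexivity|]. apply in_seq. lia. }
    assert (H := Hat n (enc a) (enc b) f ltac:(lia) ltac:(lia) Hin).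
    unfold f in H. simpl in H. rewrite !He in H. unfold rp_add. symmetry. apply H. reflexivity.
  - intros a b. exists (S (enc a + enc b + enc (s_mul M a b))). intros n Hn.
    set (f := fEq (tmul (tvar (enc a)) (tvar (enc b))) (tvar (enc (s_mul M a b)))).
    assert (Hin : In f (atoms_ij n (enc a) (enc b))).
    { unfold atoms_ij. apply in_app_iff. right. apply in_app_iff. right.
      apply in_map_iff. eexists; split; [reflexivity|]. apply in_seq. lia. }
    assert (H := Hat n (enc a) (enc b) f ltac:(lia) ltac:(lia) Hin).
    unfold f in H. simpl in H. rewrite !He in H. unfold rp_mul. symmetry. apply H. reflexivity.
  - intros a b. split.
    + intros Hab. exists (S (enc a + enc b)). intros n Hn.
      assert (H := Hat n (enc a) (enc b) (fLe (tvar (enc a)) (tvar (enc b)))).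
      simpl in H. rewrite !He in H. apply H; try lia; simpl; auto.
    + intros [N HN]. apply NNPP. intros Hab.
      set (n := S (N + enc a + enc b)).
      assert (H := Hat n (enc a) (enc b) (fLe (tvar (enc a)) (tvar (enc b)))).
      simpl in H. rewrite !He in H. apply Hab. apply H; try (unfold n; lia); [simpl; auto|].
      apply HN. unfold n; lia.
Qed.
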